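(* Let $k\ge 1$ and let $T,\widetilde{T}$ be binary phylogenetic $X$-trees with $|X|=2k$ and $A_k(T)=A_k(\widetilde{T})$. Let $[x,y]$ be a cherry of $T$, and let $P=x,\beta_1,\ldots,\beta_m,y$ be the unique $x$-$y$ path in $\widetilde{T}$. Deleting all vertices of $P$ (and their incident edges) from $\widetilde{T}$ yields trees $T_{A_1},\ldots,T_{A_m}$ (where $T_{A_i}$ was attached to $\beta_i$) with leaf sets $A_1,\ldots,A_m$. Then $|A_i|$ is even for every $i\in\{1,\dots,m\}$.
   Context: A phylogenetic $X$-tree is a tree with no vertices of degree 2 whose leaves are bijectively labelled by (and identified with) $X$; binary means maximum degree 3. A cherry $[x,y]$ is a pair of leaves adjacent to the same vertex. For a binary character $f: X\to\{a,b\}$, $l(f,T)$ is the minimum, over all maps $g:V(T)\to\{a,b\}$ with $g|_X=f$, of the number of edges $\{u,v\}$ with $g(u)\ne g(v)$; $A_k(T)$ is the set of all binary characters $f$ on $X$ with $l(f,T)=k$. *)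

(* Defs.v *)
From mathcomp Require Import all_boot.
Set Implicit Arguments. Unset Strict Implicit. Unset Printing Implicit Defensive.

Definition deg (V : finType) (e : rel V) (v : V) : nat := #|[set w | e v w]|.

Definition is_tree (V : finType) (e : rel V) : Prop :=
  [/\ symmetric e, irreflexive e,
      (forall u v, connect e u v) &
      (forall c : seq V, uniq c -> 3 <= size c -> ~~ cycle e c)].

Definition phylo_tree (X V : finType) (e : rel V) (phi : X -> V) : Prop :=
  [/\ is_tree e, injective phi,
      (forall v, (deg e v == 1) = (v \in codom phi)) &
      (forall v, deg e v != 2)].

Definition binary_phylo_tree (X V : finType) (e : rel V) (phi : X -> V) : Prop :=
  phylo_tree e phi /\ (forall v, deg e v <= 3).

Definition changes (V : finType) (e : rel V) (g : V -> bool) : nat :=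
  #|[set E : {set V} | [exists u, exists v,
        [&& e u v, E == [set u; v] & g u != g v]]]|.

Definition pscore (X V : finType) (e : rel V) (phi : X -> V) (f : X -> bool) : nat :=
  \big[minn/#|{set V}|]_(g : {ffun V -> bool} | [forall x, g (phi x) == f x])
     changes e g.

Definition A_k (X V : finType) (e : rel V) (phi : X -> V) (k : nat)
  : {set {ffun X -> bool}} := [set f : {ffun X -> bool} | pscore e phi f == k].

Definition cherry (X V : finType) (e : rel V) (phi : X -> V) (x y : X) : Prop :=
  x != y /\ exists w, e (phi x) w /\ e (phi y) w.

(* Main.v *)
Require Import Defs.
From mathcomp Require Import all_boot.
From mathcomp Require Import zify.
Set Implicit Arguments. Unset Strict Implicit. Unset Printing Implicit Defensive.


Section Walks.
Variable V : finType.
Implicit Types (a u v : V) (s : seq V) (w : V * seq V).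

Definition wedg w : seq {set V} := pairmap (fun u v => [set u; v]) w.1 w.2.
Definition lst w := last w.1 w.2.
Definition ends w := [:: w.1; lst w].

Lemma memE a s F : F \in wedg (a, s) ->
  exists s1 v s2, s = s1 ++ v :: s2 /\ F = [set last a s1; v].
Proof.
elim: s a => [|b s IH] a //=; rewrite /wedg /= inE => /orP[/eqP->|].
  by exists [::], b, s.
move/(IH b) => [s1 [v [s2 [-> ->]]]]; by exists (b :: s1), v, s2.
Qed.

Lemma memE2 a s1 v s2 : [set last a s1; v] \in wedg (a, s1 ++ v :: s2).
Proof. by rewrite /wedg /= pairmap_cat mem_cat /= inE eqxx orbT. Qed.

Lemma memE_sub a s F t : F \in wedg (a, s) -> t \in F -> t \in a :: s.
Proof.
move/memE=> [s1 [v [s2 [-> ->]]]]; rewrite in_set2 => /orP[]/eqP->.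
  have := mem_last a s1; rewrite !inE mem_cat => /orP[->//|->]; by rewrite orbT.
by rewrite inE mem_cat inE eqxx !orbT.
Qed.

Lemma last_rev_belast a s : last (last a s) (rev (belast a s)) = a.
Proof.
elim/last_ind: s => [|s z _] //=.
by rewrite last_rcons belast_rcons rev_cons last_rcons.
Qed.

Lemma path_avoid (e : rel V) (Q : pred {set V}) a s :
  path e a s -> (forall F, F \in wedg (a, s) -> Q F) ->
  path [rel x y | e x y && Q [set x; y]] a s.
Proof.
elim: s a => [|b s IH] a //= /andP[eab ps] H.
rewrite eab (H [set a; b]) /=; last by rewrite /wedg /= inE eqxx.
apply: IH => // F HF; apply: H; by rewrite /wedg /= inE HF orbT.
Qed.

Lemma path_closed (r : rel V) (K : pred V) a s :
  (forall x y, K x -> r x y -> K y) -> path r a s -> K a -> K (last a s).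
Proof.
move=> HK; elim: s a => [|b s IH] a //= /andP[rab ps] Ka.
apply: IH => //; exact: HK Ka rab.
Qed.

Lemma path_closed_rev (r : rel V) (K : pred V) a s :
  symmetric r -> (forall x y, K x -> r x y -> K y) -> path r a s -> K (last a s) -> K a.
Proof.
move=> sr HK; elim: s a => [|b s IH] a //= /andP[rab ps] Kl.
apply: (HK b); first exact: IH.
by rewrite sr.
Qed.

Lemma change_on_path (e : rel V) (g : V -> bool) a s :
  path e a s -> g a != g (last a s) ->
  exists2 F, F \in wedg (a, s) &
    F \in [set E : {set V} | [exists u, exists v, [&& e u v, E == [set u; v] & g u != g v]]].
Proof.
elim: s a => [|b s IH] a //=; first by rewrite eqxx.
move=> /andP[eab ps] Hg.
case: (boolP (g a == g b)) => [/eqP gab | nab].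
  rewrite gab in Hg; have [F HF1 HF2] := IH b ps Hg.
  by exists F => //; rewrite /wedg /= inE HF1 orbT.
exists [set a; b]; first by rewrite /wedg /= inE eqxx.
by rewrite inE; apply/existsP; exists a; apply/existsP; exists b; rewrite eab eqxx nab.
Qed.

Lemma set2_cases (a b c d : V) : a != b -> [set a; b] = [set c; d] ->
  (a = c /\ b = d) \/ (a = d /\ b = c).
Proof.
move=> nab H.
have : a \in [set c; d] by rewrite -H set21.
have : b \in [set c; d] by rewrite -H set22.
rewrite !in_set2 => /orP[]/eqP Hb /orP[]/eqP Ha.
- by move: nab; rewrite Ha Hb eqxx.
- by right.
- by left.
- by move: nab; rewrite Ha Hb eqxx.
Qed.

End Walks.


Section Pairing.
Variable V : finType.
Variable e : rel V.
Hypothesis esym : symmetric e.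
Hypothesis eirr : irreflexive e.
Implicit Types (a u v : V) (s : seq V) (w : V * seq V).

Lemma rev_path_sym a s : path e a s -> path e (last a s) (rev (belast a s)).
Proof.
rewrite rev_path; apply: sub_path => x y /=; by rewrite esym.
Qed.

Lemma perm4 (a b c d : V) : perm_eq [:: a; b; c; d] [:: a; c; b; d].
Proof. by rewrite perm_cons (perm_catCA [:: b] [:: c] [:: d]). Qed.

Lemma exchange w1 w2 : path e w1.1 w1.2 -> path e w2.1 w2.2 ->
  has (mem (wedg w2)) (wedg w1) -> exists w1' w2',
  [/\ path e w1'.1 w1'.2, path e w2'.1 w2'.2,
      size w1'.2 + size w2'.2 < size w1.2 + size w2.2 &
      perm_eq (ends w1' ++ ends w2') (ends w1 ++ ends w2)].
Proof.
case: w1 w2 => [a1 s] [a2 t] /= p1 p2 /hasP [F HF1 HF2].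
move: (HF1) => /memE [s1 [v1 [s2 [Es EF1]]]].
move: HF2 => /memE [t1 [v2 [t2 [Et EF2]]]].
subst s t.
move: (p1) (p2); rewrite !cat_path /= => /and3P[ps1 e1 ps2] /and3P[pt1 e2 pt2].
have n1 : last a1 s1 != v1 by apply/eqP => E; move: e1; rewrite E eirr.
have Hs : [set last a1 s1; v1] = [set last a2 t1; v2] by rewrite -EF1 EF2.
case: (set2_cases n1 Hs) => [[Hu Hv] | [Hu Hv]].
- exists (a1, s1 ++ rev (belast a2 t1)), (last v1 s2, rev (belast v1 s2) ++ t2) => /=.
  split.
  + by rewrite cat_path ps1 Hu rev_path_sym.
  + by rewrite cat_path rev_path_sym // last_rev_belast Hv.
  + rewrite !size_cat !size_rev !size_belast /=; lia.
  + rewrite /ends /lst /= !last_cat /= Hu last_rev_belast last_rev_belast Hv.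
    exact: perm4.
- exists (a1, s1 ++ t2), (a2, t1 ++ s2) => /=.
  split.
  + by rewrite cat_path ps1 Hu.
  + by rewrite cat_path pt1 -Hv.
  + rewrite !size_cat /=; lia.
  + rewrite /ends /lst /= !last_cat /= -Hu Hv.
    rewrite perm_cons; exact: permEl (perm_rev [:: last (last a2 t1) s2; a2; last (last a1 s1) t2]).
Qed.


Definition okp (L : seq V) ws := all (fun w => path e w.1 w.2) ws && perm_eq (flatten (map (@ends V) ws)) L.
Definition tot ws := sumn (map (fun w => size w.2) ws).
Lemma flat_cons w ws : flatten (map (@ends V) (w :: ws)) = ends w ++ flatten (map (@ends V) ws).
Proof. by []. Qed.

Definition DJ ws := all (fun w => all (fun w' => (w == w') || ~~ has (mem (wedg w')) (wedg w)) ws) ws.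

Lemma uniq_ws ws : uniq (flatten (map (@ends V) ws)) -> uniq ws.
Proof.
elim: ws => // w ws IH; rewrite flat_cons cat_uniq => /and3P[_ hn u] /=; rewrite IH // andbT.
apply/negP => win; move/negP: hn; apply; apply/hasP; exists w.1; last by rewrite /ends mem_head.
by apply/flattenP; exists (ends w); [apply: map_f | rewrite /ends mem_head].
Qed.

Lemma ends_inj ws w w' v : uniq (flatten (map (@ends V) ws)) -> w \in ws -> w' \in ws ->
  v \in ends w -> v \in ends w' -> w = w'.
Proof.
elim: ws => // c ws IH; rewrite flat_cons cat_uniq => /and3P[_ hn u].
have H : forall c', c' \in ws -> v \in ends c -> v \in ends c' -> False.
  move=> c' c'in hv hv'; move/negP: hn; apply; apply/hasP; exists v => //.
  by apply/flattenP; exists (ends c'); [apply: map_f|].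
move=> /predU1P[->|h1] /predU1P[->|h2] hv hv' //.
- by case: (H _ h2 hv hv').
- by case: (H _ h1 hv' hv).
- exact: IH.
Qed.

Lemma step L ws : uniq L -> okp L ws -> ~~ DJ ws -> exists ws', okp L ws' /\ tot ws' < tot ws.
Proof.
move=> uL /andP[pw pL] /allPn [w win /allPn [w' w'in]].
rewrite negb_or negbK => /andP[nww hs].
have uf : uniq (flatten (map (@ends V) ws)) by rewrite (perm_uniq pL).
have uw := uniq_ws uf.
have p1 := allP pw w win. have p2 := allP pw w' w'in.
have [w1 [w2 [q1 q2 sz pe]]] := exchange p1 p2 hs.
set rest := rem w' (rem w ws).
have Hp : perm_eq ws (w :: w' :: rest).
  apply: perm_trans (perm_to_rem win) _; rewrite perm_cons; apply: perm_to_rem.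
  by rewrite mem_rem_uniq // inE eq_sym nww w'in.
exists (w1 :: w2 :: rest); split.
- apply/andP; split.
    rewrite /= q1 q2 /=; apply/allP => c /mem_rem /mem_rem cin; exact: allP pw c cin.
  apply: perm_trans _ pL.
  have Hp' : perm_eq (w :: w' :: rest) ws by rewrite perm_sym.
  apply: perm_trans _ (perm_flatten (perm_map (@ends V) Hp')).
  have -> : flatten (map (@ends V) [:: w1, w2 & rest]) = ends w1 ++ ends w2 ++ flatten (map (@ends V) rest) by [].
  have -> : flatten (map (@ends V) [:: w, w' & rest]) = ends w ++ ends w' ++ flatten (map (@ends V) rest) by [].
  rewrite catA [X in perm_eq _ X]catA perm_cat2r; exact: pe.
- have E1 : tot (w1 :: w2 :: rest) = size w1.2 + (size w2.2 + tot rest) by [].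
  have E2 : tot ws = size w.2 + (size w'.2 + tot rest).
    by rewrite /tot (perm_sumn (perm_map (fun w => size w.2) Hp)).
  by rewrite E1 E2 !addnA ltn_add2r.
Qed.

Lemma minpair L ws : uniq L -> okp L ws -> exists ws', okp L ws' /\ DJ ws'.
Proof.
move=> uL; move: {2}(tot ws) (leqnn (tot ws)) => n; elim: n ws => [|n IH] ws ht ok;
  (case: (boolP (DJ ws)) => [dj|ndj]; first by exists ws);
  have [ws' [ok' lt]] := step uL ok ndj.
- lia.
- apply: (IH ws') => //; lia.
Qed.

Lemma initpair : (forall u v, connect e u v) ->
  forall l, ~~ odd (size l) -> exists ws, okp l ws.
Proof.
move=> conn l; move: {2}(size l) (leqnn (size l)) => n.
elim: n l => [|n IH] [|a [|b l]] //= hs ho; try (by exists [::]); try lia.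
rewrite negbK in ho.
have [ws /andP[pw pL]] := IH l (ltac:(lia)) ho.
have /connectP [s ps ->] := conn a b.
exists ((a, s) :: ws); rewrite /okp /= ps pw /=.
by rewrite /lst /= !perm_cons.
Qed.

End Pairing.


Section Tree.
Variable V : finType.
Variable e : rel V.
Hypothesis esym : symmetric e.
Hypothesis eirr : irreflexive e.
Hypothesis acyc : forall c : seq V, uniq c -> 3 <= size c -> ~~ cycle e c.
Implicit Types (a u v : V) (s : seq V).

Definition avoid (F : {set V}) := [rel x y | e x y && ([set x; y] != F)].

Lemma avoid_sym F : symmetric (avoid F).
Proof. by move=> x y /=; rewrite esym setUC. Qed.

Lemma T0 u v s : e u v -> path (avoid [set u; v]) u s -> last u s = v -> False.
Proof.
move=> euv ps hl; move: hl; case/shortenP: ps => p' pp' up' _.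
case: p' pp' up' => [|b [|c r]] pp' up' /= hl.
- by move: euv; rewrite hl eirr.
- by move: pp'; rewrite /= hl eqxx andbF.
- have pe : path e u [:: b, c & r] by move: pp'; apply: sub_path => x y /andP[].
  have hc : cycle e [:: u, b, c & r].
    by rewrite /cycle rcons_path pe /= hl esym.
  by move: hc; rewrite (negbTE (acyc up' isT)).
Qed.

Lemma T0_walk u v s : e u v -> path e u s -> last u s = v -> [set u; v] \in wedg (u, s).
Proof.
move=> euv ps hl; apply/negPn/negP => hn.
have ps' : path (avoid [set u; v]) u s.
  apply: (path_avoid (Q := fun F => F != [set u; v])) => // F HF.
  by apply/eqP => E; move: hn; rewrite -E HF.
exact: T0 euv ps' hl.
Qed.

Lemma crossconn a s1 v s2 t1 t2 : path e a (s1 ++ v :: s2) -> uniq (a :: s1 ++ v :: s2) ->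
  t1 \in a :: s1 -> t2 \in v :: s2 -> connect (avoid [set last a s1; v]) t1 t2 -> False.
Proof.
set u := last a s1; set F := [set u; v].
move=> pp up ht1 ht2 ct.
move: pp; rewrite cat_path /= => /and3P[pA euv pB].
move: up; rewrite -cat_cons cat_uniq => /and3P[_ hn _].
have vA : v \notin a :: s1 by apply/negP => vin; move/negP: hn; apply; apply/hasP; exists v => //; exact: mem_head.
have uB : u \notin v :: s2.
  apply/negP => uin; move/negP: hn; apply; apply/hasP; exists u => //; exact: mem_last.
have hA : path (avoid F) a s1.
  apply: (path_avoid (Q := fun F' => F' != F)) => // F' HF'.
  by apply/eqP => E; move/negP: vA; apply; apply: (memE_sub HF'); rewrite E set22.
have hB : path (avoid F) v s2.
  apply: (path_avoid (Q := fun F' => F' != F)) => // F' HF'.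
  by apply/eqP => E; move/negP: uB; apply; apply: (memE_sub HF'); rewrite E set21.
have cs := sym_connect_sym (avoid_sym F).
have c1 : connect (avoid F) u a by rewrite cs; apply: (path_connect hA); exact: mem_last.
have c2 : connect (avoid F) a t1 by apply: (path_connect hA).
have c3 : connect (avoid F) t2 v by rewrite cs; apply: (path_connect hB).
have : connect (avoid F) u v.
  by apply: connect_trans c1 (connect_trans c2 (connect_trans ct c3)).
by case/connectP => p pp hl; apply: (T0 euv pp (sym_eq hl)).
Qed.

Lemma allPedges a p q0 qs F : path e a p -> uniq (a :: p) -> F \in wedg (a, p) ->
  path e q0 qs ->
  ((q0 == a) && (last q0 qs == last a p)) || ((q0 == last a p) && (last q0 qs == a)) ->
  F \in wedg (q0, qs).
Proof.
move=> pp up HF pq hq; apply/negPn/negP => hn.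
move: HF => /memE [s1 [v [s2 [Ep EF]]]]; subst p F.
have pq' : path (avoid [set last a s1; v]) q0 qs.
  apply: (path_avoid (Q := fun F' => F' != [set last a s1; v])) => // F' HF'.
  by apply/eqP => E; move: hn; rewrite -E HF'.
have cq : connect (avoid [set last a s1; v]) q0 (last q0 qs) by apply: (path_connect pq'); exact: mem_last.
have cs := sym_connect_sym (avoid_sym [set last a s1; v]).
have lB : last a (s1 ++ v :: s2) \in v :: s2 by rewrite last_cat /=; exact: mem_last.
case/orP: hq => /andP[/eqP h1 /eqP h2].
- apply: (crossconn pp up (mem_head a s1) lB); by move: cq; rewrite h2 h1.
- apply: (crossconn pp up (mem_head a s1) lB); by rewrite cs; move: cq; rewrite h2 h1.
Qed.

End Tree.


Lemma card_bigcup_le (T I : finType) (P : pred I) (A : I -> {set T}) :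
  #|\bigcup_(i | P i) A i| <= \sum_(i | P i) #|A i|.
Proof.
elim/big_rec2: _ => [|i S n _ H]; first by rewrite cards0.
apply: leq_trans (leq_card_setU _ _) _; by rewrite leq_add2l.
Qed.

Lemma bigmin_le (I : eqType) (r : seq I) (P : pred I) (F : I -> nat) idx j :
  j \in r -> P j -> \big[minn/idx]_(i <- r | P i) F i <= F j.
Proof.
elim: r => //= a r IH; rewrite inE big_cons => /orP[/eqP<- ->|jr Pj]; first exact: geq_minl.
case: (P a); last exact: IH.
apply: leq_trans (geq_minr _ _) (IH jr Pj).
Qed.

Section Pars.
Variables (X V : finType) (e : rel V) (phi : X -> V).
Hypothesis esym : symmetric e.

Lemma changes_le (g : V -> bool) :
  changes e g <= \sum_(v | g v) #|[set t | e v t && ~~ g t]|.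
Proof.
rewrite /changes.
set S := fun v => [set [set v; t] | t in [set t | e v t && ~~ g t]].
apply: (@leq_trans #|\bigcup_(v | g v) S v|).
  apply: subset_leq_card; apply/subsetP => E; rewrite inE => /existsP[u /existsP[v /and3P[euv /eqP-> guv]]].
  case: (boolP (g u)) => gu.
    apply/bigcupP; exists u => //; apply/imsetP; exists v => //.
    by rewrite inE euv; move: guv; rewrite gu; case: (g v).
  apply/bigcupP; exists v; first by move: guv; rewrite (negbTE gu); case: (g v).
  apply/imsetP; exists u; first by rewrite inE esym euv gu.
  by rewrite setUC.
apply: leq_trans (card_bigcup_le _ _) _.
apply: leq_sum => v _; exact: leq_imset_card.
Qed.

Lemma changes_bound (g : V -> bool) (B : pred V) :
  (forall v, g v -> ~~ B v -> #|[set t | e v t && ~~ g t]| <= 1) ->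
  (forall v, g v -> B v -> [set t | e v t && ~~ g t] = set0) ->
  changes e g <= #|[set v | g v && ~~ B v]|.
Proof.
move=> H1 H2; apply: leq_trans (changes_le g) _.
rewrite -sum1dep_card (bigID B) /=.
rewrite big1 ?add0n; last by move=> v /andP[gv bv]; rewrite H2 // cards0.
by apply: leq_sum => v /andP[gv bv]; apply: H1.
Qed.

Lemma pscore_le (f : {ffun X -> bool}) (g : {ffun V -> bool}) :
  [forall x, g (phi x) == f x] -> pscore e phi f <= changes e g.
Proof.
move=> hg; rewrite /pscore; apply: bigmin_le => //; exact: mem_index_enum.
Qed.

Lemma pscore_ge (f : {ffun X -> bool}) k :
  k <= #|{set V}| ->
  (forall g : {ffun V -> bool}, [forall x, g (phi x) == f x] -> k <= changes e g) ->
  k <= pscore e phi f.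
Proof.
move=> hk H; rewrite /pscore; apply: (big_ind (fun n => k <= n)) => //.
- by move=> a b ha hb; rewrite leq_min ha hb.
Qed.

End Pars.


Section UB.
Variables (X V : finType) (e : rel V) (phi : X -> V).
Hypothesis hT : binary_phylo_tree e phi.

Lemma nb_sub v w : e v w -> [set t | e v t] = [set w] -> forall t, e v t -> t = w.
Proof. by move=> _ H t evt; apply/set1P; rewrite -H inE. Qed.

Lemma leaf_nb z w t : e (phi z) w -> e (phi z) t -> t = w.
Proof.
case: hT => [[[_ _ _ _] _ hl _] _] ew et.
have : deg e (phi z) == 1 by rewrite hl codom_f.
case/cards1P => c hc.
have hw : w \in [set c] by rewrite -hc inE.
have ht : t \in [set c] by rewrite -hc inE.
by move: hw ht; rewrite !inE => /eqP-> /eqP->.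
Qed.

Lemma leaf_deg z : #|[set t | e (phi z) t]| = 1.
Proof. case: hT => [[_ _ hl _] _]; apply/eqP; by rewrite -/(deg e (phi z)) hl codom_f. Qed.

Lemma UB_leaves (f : {ffun X -> bool}) : pscore e phi f <= #|[set z | f z]|.
Proof.
case: hT => [[[esym _ _ _] inj hl _] _].
pose g0 : {ffun V -> bool} := [ffun v => [exists z, (phi z == v) && f z]].
have hg : [forall x, g0 (phi x) == f x].
  apply/forallP => x; rewrite ffunE; apply/eqP; apply/idP/idP.
    by case/existsP => z /andP[/eqP/inj -> ].
  by move=> fx; apply/existsP; exists x; rewrite eqxx fx.
apply: leq_trans (pscore_le e hg) _.
apply: leq_trans (changes_bound esym (g := g0) (B := pred0) _ _) _ => //.
- move=> v; rewrite ffunE => /existsP[z /andP[/eqP<- _]] _.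
  apply: leq_trans (subset_leq_card _) (eq_leq (leaf_deg z)).
  by apply/subsetP => t; rewrite !inE => /andP[].
- apply: leq_trans (leq_imset_card phi [set z | f z]).
  apply: subset_leq_card; apply/subsetP => v; rewrite !inE ffunE andbT.
  case/existsP => z /andP[/eqP<- fz]; apply/imsetP; exists z => //; by rewrite inE.
Qed.

Lemma UB_cherry (f : {ffun X -> bool}) x y :
  cherry e phi x y -> f x -> f y -> pscore e phi f < #|[set z | f z]|.
Proof.
move=> [nxy [w [exw eyw]]] fx fy.
case: hT => [[[esym eirr _ _] inj hl _] hd].
have nphi : phi x != phi y by apply: contra nxy => /eqP/inj->.
have sub2 : [set phi x; phi y] \subset [set t | e w t].
  by apply/subsetP => t; rewrite !inE => /orP[]/eqP->; rewrite esym.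
have wnot : w \notin codom phi.
  rewrite -hl; apply/negP => /eqP hw.
  by move: (subset_leq_card sub2); rewrite cards2 nphi /deg in hw *; rewrite hw.
pose g1 : {ffun V -> bool} := [ffun v => (v == w) || [exists z, (phi z == v) && f z]].
have g1phi : forall z, g1 (phi z) = f z.
  move=> z; rewrite ffunE.
  have -> : (phi z == w) = false by apply/negP => /eqP hw; move: wnot; rewrite -hw codom_f.
  apply/idP/idP.
    by case/existsP => z' /andP[/eqP/inj -> ].
  by move=> fz; apply/existsP; exists z; rewrite eqxx fz.
have hg : [forall x, g1 (phi x) == f x] by apply/forallP => z; rewrite g1phi.
apply: leq_ltn_trans (pscore_le e hg) _.
set B := [pred v | (v == phi x) || (v == phi y)].
apply: leq_ltn_trans (changes_bound esym (g := g1) (B := B) _ _) _.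
- move=> v; rewrite ffunE => /orP[/eqP-> _|].
    have hsub : [set t | e w t && ~~ g1 t] \subset [set t | e w t] :\: [set phi x; phi y].
      apply/subsetP => t; rewrite !inE => /andP[-> gt]; rewrite andbT.
      by apply/negP => /orP[]/eqP ht; move: gt; rewrite ht g1phi ?fx ?fy.
    apply: leq_trans (subset_leq_card hsub) _.
    rewrite cardsD (setIidPr sub2) cards2 nphi.
    have := hd w; rewrite /deg; lia.
  move=> /existsP[z /andP[/eqP<- _]] _.
  apply: leq_trans (subset_leq_card _) (eq_leq (leaf_deg z)).
  by apply/subsetP => t; rewrite !inE => /andP[].
- move=> v _ /orP[]/eqP->; apply/setP => t; rewrite !inE;
    apply/negP => /andP[et gt]; move: gt.
    by rewrite (leaf_nb exw et) ffunE eqxx.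
  by rewrite (leaf_nb eyw et) ffunE eqxx.
- set F := [set z | f z].
  have hF : [set v | g1 v && ~~ B v] \subset w |: (phi @: (F :\: [set x; y])).
    apply/subsetP => v; rewrite !inE ffunE => /andP[/orP[->//|/existsP[z /andP[/eqP<- fz]]] hB].
    apply/orP; right; apply/imsetP; exists z => //.
    rewrite !inE fz andbT; apply/negP => /orP[]/eqP hz; move: hB; by rewrite hz eqxx ?orbT.
  apply: leq_ltn_trans (subset_leq_card hF) _.
  apply: leq_ltn_trans (leq_card_setU _ _) _.
  rewrite cards1.
  have hxy : [set x; y] \subset F by apply/subsetP => t; rewrite !inE => /orP[]/eqP->.
  have := leq_imset_card phi (F :\: [set x; y]).
  have := subset_leq_card hxy.
  rewrite cardsD (setIidPr hxy) cards2 nxy; lia.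
Qed.

End UB.


Lemma memsplit (T : eqType) (s : seq T) z : z \in s -> exists s1 s2, s = s1 ++ z :: s2.
Proof. by case/splitPr => s1 s2; exists s1, s2. Qed.

Lemma count_enumX (X : finType) (P : pred X) : count P (enum X) = #|P|.
Proof. by rewrite cardE -size_filter /enum_mem filter_predT. Qed.

Lemma parity_flat (T : eqType) (P : pred T) (ss : seq (seq T)) :
  (forall s, s \in ss -> ~~ odd (count P s)) -> ~~ odd (count P (flatten ss)).
Proof.
elim: ss => //= s ss IH H; rewrite count_cat oddD.
rewrite (negbTE (H s (mem_head _ _))) /=; apply: IH => s' hs'; apply: H; by rewrite inE hs' orbT.
Qed.

Lemma endsne (V : finType) (ws : seq (V * seq V)) c :
  uniq (flatten (map (@ends V) ws)) -> c \in ws -> c.1 != lst c.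
Proof.
elim: ws => // c' ws IH; rewrite flat_cons cat_uniq => /and3P[u1 _ u2].
rewrite inE => /predU1P[->|cin]; last exact: IH.
by move: u1; rewrite /ends /= inE andbT.
Qed.

Lemma uniq_sel (V : finType) (ws : seq (V * seq V)) (sel : V * seq V -> V) :
  uniq (flatten (map (@ends V) ws)) -> (forall c, c \in ws -> sel c \in ends c) -> uniq (map sel ws).
Proof.
move=> uf hs; rewrite map_inj_in_uniq; first exact: uniq_ws uf.
move=> c c' cin c'in h; apply: (ends_inj uf cin c'in (hs c cin)); rewrite h; exact: hs.
Qed.

Lemma size_flat_ends (V : finType) (ws : seq (V * seq V)) :
  size (flatten (map (@ends V) ws)) = (size ws).*2.
Proof. by elim: ws => //= c ws IH; rewrite IH doubleS. Qed.

Section Main.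
Variables (X V : finType) (e : rel V) (phi : X -> V) (x y : X) (p : seq V) (b w : V).
Hypothesis hT : binary_phylo_tree e phi.
Hypothesis pp : path e (phi x) p.
Hypothesis hl : last (phi x) p = phi y.
Hypothesis up : uniq (phi x :: p).
Hypothesis bin : b \in p.
Hypothesis bny : b != phi y.
Hypothesis ebw : e b w.
Hypothesis wnot : w \notin phi x :: p.

Let a := phi x.
Let Pl := phi x :: p.
Let eC := [rel u v | [&& e u v, u \notin Pl & v \notin Pl]].
Let Cs := [pred v | connect eC w v].

Lemma esy : symmetric e. Proof. by case: hT => [[[]]]. Qed.
Lemma eir : irreflexive e. Proof. by case: hT => [[[]]]. Qed.
Lemma econ : forall u v, connect e u v. Proof. by case: hT => [[[]]]. Qed.
Lemma eacy : forall c : seq V, uniq c -> 3 <= size c -> ~~ cycle e c. Proof. by case: hT => [[[]]]. Qed.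
Lemma inj : injective phi. Proof. by case: hT => [[]]. Qed.
Lemma hleaf v : (deg e v == 1) = (v \in codom phi). Proof. by case: hT => [[]]. Qed.
Lemma hdeg v : deg e v <= 3. Proof. by case: hT. Qed.

Lemma Coff v : Cs v -> v \notin Pl.
Proof.
rewrite /Cs /= => /connectP [s ps ->].
apply: (path_closed (K := [pred t | t \notin Pl])) ps wnot.
by move=> u t _ /and3P[].
Qed.

Lemma bsplit : exists s1 n s2, p = s1 ++ b :: n :: s2.
Proof.
have [s1 [[|n s2] E]] := memsplit bin; last by exists s1, n, s2.
by move: hl bny; rewrite E last_cat /= => ->; rewrite eqxx.
Qed.


Lemma bnb : exists s1 n s2, [/\ p = s1 ++ b :: n :: s2,
   [set last a s1; b] \in wedg (a, p), [set b; n] \in wedg (a, p),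
   (forall t, e b t -> [|| t == last a s1, t == n | t == w]) &
   b \notin codom phi].
Proof.
have [s1 [n [s2 E]]] := bsplit.
exists s1, n, s2.
set bp := last a s1.
have pp' := pp; rewrite E cat_path /= in pp'; case/and4P: pp' => _ ebpb ebn _.
have up' := up; rewrite E -cat_cons cat_uniq in up'; case/and3P: up' => _ hn ub.
have bpA : bp \in a :: s1 by exact: mem_last.
have bpn : bp != n by apply/negP => /eqP h; move/negP: hn; apply; apply/hasP; exists bp => //; rewrite h !inE eqxx orbT.
have bpb : bp != b by apply/negP => /eqP h; move/negP: hn; apply; apply/hasP; exists bp => //; rewrite h !inE eqxx.
have bn : b != n by move: ub; rewrite /= inE negb_or => /andP[/andP[]].
have wPl : forall t, t \in Pl -> w != t by move=> t ht; apply/eqP => h; move: wnot; rewrite h ht.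
have Pb : b \in Pl by rewrite /Pl inE bin orbT.
have Pn : n \in Pl by rewrite /Pl E inE mem_cat !inE eqxx !orbT.
have Pbp : bp \in Pl by rewrite /Pl E -cat_cons mem_cat bpA.
set A := bp |: (n |: [set w]).
have cA : #|A| = 3.
  rewrite /A cardsU1 cardsU1 cards1 !inE.
  rewrite (negbTE bpn) eq_sym (negbTE (wPl _ Pbp)) eq_sym (negbTE (wPl _ Pn)) //.
have sA : A \subset [set t | e b t].
  apply/subsetP => t; rewrite !inE => /or3P[]/eqP->; by rewrite ?ebw ?ebn // esy.
have hdb : deg e b = 3 by apply/eqP; rewrite eqn_leq hdeg -cA /deg subset_leq_card.
split.
- exact: E.
- by rewrite E memE2.
- by rewrite E -cat_rcons -[b in [set b; n]](last_rcons a s1 b) memE2.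
- move=> t ebt; apply/negPn/negP => ht.
  have : t |: A \subset [set t | e b t] by rewrite subUset sub1set inE ebt sA.
  move/subset_leq_card; rewrite cardsU1 cA -/(deg e b) hdb.
  by rewrite /A !inE (negbTE ht).
- by rewrite -hleaf hdb.
Qed.

Let eN := [rel s t | e s t && ([set s; t] \notin wedg (a, p))].

Lemma eN_sym : symmetric eN.
Proof. by move=> u t /=; rewrite esy setUC. Qed.

Lemma connCb (F : {set V}) : (forall z, z \in F -> z \in Pl) -> forall u t, Cs u -> e u t -> connect (avoid e F) b t.
Proof.
move=> HF u t Cu eut.
have nF : forall z z', z \notin Pl -> [set z; z'] != F.
  move=> z z' zP; apply/negP => /eqP hz; move/negP: zP; apply; apply: HF; by rewrite -hz set21.
have c1 : connect (avoid e F) b w.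
  by apply: connect1; rewrite /= ebw /= setUC nF.
have c2 : connect (avoid e F) w u.
  apply: connect_sub Cu => z z' /and3P[ezz zP z'P]; apply: connect1; by rewrite /= ezz nF.
have c3 : connect (avoid e F) u t.
  by apply: connect1; rewrite /= eut nF // Coff.
exact: connect_trans c1 (connect_trans c2 c3).
Qed.

Lemma Kclosed u t : (u == b) || Cs u -> eN u t -> (t == b) || Cs t.
Proof.
have [s1 [n [s2 [E Fp Fn hnb bleaf]]]] := bnb.
move=> /orP[/eqP-> | Cu] /andP[eut hF].
- case/or3P: (hnb t eut) => /eqP ht.
  + by move: hF; rewrite ht setUC Fp.
  + by move: hF; rewrite ht Fn.
  + by rewrite ht /Cs /= connect0 orbT.
- case: (boolP (t \in Pl)) => tP; last first.
    have uP := Coff Cu; apply/orP; right; rewrite /Cs /=; apply: connect_trans Cu (connect1 _); by rewrite /= eut uP tP.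
  case: (boolP (t == b)) => [//|tnb]; exfalso.
  have pp' : path e a (s1 ++ b :: n :: s2) by rewrite -E.
  have up' : uniq (a :: s1 ++ b :: n :: s2) by rewrite -E.
  have PlE : Pl = (a :: s1) ++ b :: n :: s2 by rewrite /Pl E.
  have sub : forall F, F = [set last a s1; b] \/ F = [set b; n] -> forall z, z \in F -> z \in Pl.
    move=> F [] -> z; rewrite in_set2 => /orP[]/eqP->; rewrite PlE mem_cat ?mem_last //= !inE eqxx ?orbT //.
  move: tP; rewrite PlE mem_cat => /orP[tA|].
  + apply: (crossconn esy eir eacy pp' up' tA (mem_head b (n :: s2))).
    rewrite (sym_connect_sym (avoid_sym esy _)).
    apply: (connCb _ Cu eut) => z; apply: sub; by left.
  + rewrite inE (negbTE tnb) /= => tB.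
    have pp'' : path e a (rcons s1 b ++ n :: s2) by rewrite cat_rcons.
    have up'' : uniq (a :: rcons s1 b ++ n :: s2) by rewrite cat_rcons.
    have bA : b \in a :: rcons s1 b by rewrite inE mem_rcons mem_head orbT.
    apply: (crossconn esy eir eacy pp'' up'' bA tB).
    rewrite last_rcons; apply: (connCb _ Cu eut) => z; apply: sub; by right.
Qed.

Lemma NotXY (ws : seq (V * seq V)) :
  perm_eq (flatten (map (@ends V) ws)) (map phi (enum X)) ->
  all (fun w => path e w.1 w.2) ws -> DJ ws ->
  odd #|[set z | connect eC w (phi z)]| ->
  forall c, c \in ws -> ((c.1 == a) && (lst c == last a p)) || ((c.1 == last a p) && (lst c == a)) -> False.
Proof.
move=> hperm hall hDJ hodd c cin hc.
have [s1 [n [s2 [E Fp Fn hnb bleaf]]]] := bnb.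
have allE : forall F, F \in wedg (a, p) -> F \in wedg c.
  move=> F HF; case: c cin hc => q0 qs cin hc.
  apply: (allPedges esy eir eacy pp up HF) => //; exact: (allP hall _ cin).
have hcnt : count Cs (flatten (map (@ends V) ws)) = #|[set z | connect eC w (phi z)]|.
  by rewrite (permP hperm) count_map count_enumX cardsE.
have : has (fun c' => odd (count Cs (ends c'))) ws.
  apply/negPn/negP => /hasPn hn.
  move: hodd; rewrite -hcnt; apply/negP.
  apply: parity_flat => s /mapP [c'' c''in ->]; exact: hn.
case/hasP => c' c'in oc'.
have cPl : forall v, v \in Pl -> ~~ Cs v by move=> v vP; apply/negP => /Coff; rewrite vP.
have aPl : a \in Pl by exact: mem_head.
have lPl : last a p \in Pl by exact: mem_last.
have c0 : count Cs (ends c) = 0.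
  have cPl2 : forall v, v \in Pl -> connect eC w v = false by move=> v /cPl /negbTE.
  rewrite /ends /=; case/orP: hc => /andP[/eqP-> /eqP->]; by rewrite !cPl2.
have nc : c' != c by apply/eqP => h; move: oc'; rewrite h c0.
have hdis : ~~ has (mem (wedg c)) (wedg c').
  by have := allP (allP hDJ c' c'in) c cin; rewrite /= (negbTE nc).
have leaf : forall v, v \in ends c' -> v != b.
  move=> v vin.
  have hv : v \in map phi (enum X).
    by rewrite -(perm_mem hperm); apply/flattenP; exists (ends c') => //; exact: map_f.
  move/mapP: hv => [z _ ->]; apply/eqP => h; move: bleaf; by rewrite -h codom_f.
have l1 := leaf _ (mem_head _ _).
have l2 : lst c' != b by apply: leaf; rewrite /ends !inE eqxx orbT.
clear leaf; case: c' c'in oc' nc hdis l1 l2 => q0 qs c'in oc' nc hdis l1 l2.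
have pN : path eN q0 qs.
  apply: (path_avoid (Q := fun F => F \notin wedg (a, p))) => [|F HF]; first exact: (allP hall _ c'in).
  apply/negP => hFP; move/negP: hdis; apply; apply/hasP; exists F => //; exact: allE.
rewrite /ends /lst /= addn0 in oc' l2.
case hC1 : (connect eC w q0).
- have KL : (last q0 qs == b) || connect eC w (last q0 qs).
    by apply: (path_closed (K := [pred t | (t == b) || Cs t])) pN _ => //= [u t|]; [exact: Kclosed | rewrite hC1 orbT].
  move: oc' KL; rewrite hC1 (negbTE l2) /=; by case: (connect eC w (last q0 qs)).
- have KL : (q0 == b) || connect eC w q0.
    apply: (path_closed_rev (K := [pred t | (t == b) || Cs t])) eN_sym _ pN _ => //= [u t|]; first exact: Kclosed.
    by move: oc'; rewrite hC1; case: (connect eC w (last q0 qs)) => //; rewrite orbT.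
  by move: KL; rewrite hC1 (negbTE l1).
Qed.

Lemma main_contra k (V1 : finType) (e1 : rel V1) (phi1 : X -> V1) :
  #|X| = 2 * k -> binary_phylo_tree e1 phi1 -> A_k e1 phi1 k = A_k e phi k ->
  cherry e1 phi1 x y -> odd #|[set z | connect eC w (phi z)]| -> False.
Proof.
move=> hX hT1 hA hch hodd.
set L := map phi (enum X).
have uL : uniq L by rewrite map_inj_uniq ?enum_uniq //; exact: inj.
have sL : size L = 2 * k by rewrite size_map -cardT hX.
have oL : ~~ odd (size L) by rewrite sL oddM.
have [ws0 ok0] := initpair econ oL.
have [ws [/andP[hall hperm] hDJ]] := minpair esy eir uL ok0.
have uf : uniq (flatten (map (@ends V) ws)) by rewrite (perm_uniq hperm).
have szws : size ws = k.
  have := perm_size hperm; rewrite size_flat_ends sL -mul2n => /eqP; rewrite eqn_mul2l /= => /eqP //.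
have hxy := NotXY hperm hall hDJ hodd.
have uws := uniq_ws uf.
pose inxy (v : V) := (v == a) || (v == phi y).
pose st (c : V * seq V) := if inxy (lst c) then lst c else c.1.
pose ot (c : V * seq V) := if inxy (lst c) then c.1 else lst c.
pose S := map st ws.
pose f : {ffun X -> bool} := [ffun z => phi z \in S].
have ene : forall c, c \in ws -> c.1 != lst c by move=> c; exact: endsne uf.
have inL : forall c v, c \in ws -> v \in ends c -> exists z, v = phi z.
  move=> c v cin vin.
  have : v \in L by rewrite -(perm_mem hperm); apply/flattenP; exists (ends c) => //; exact: map_f.
  by case/mapP => z _ ->; exists z.
have stin : forall c, st c \in ends c by move=> c; rewrite /st /ends; case: ifP; rewrite !inE eqxx ?orbT.
have otin : forall c, ot c \in ends c by move=> c; rewrite /ot /ends; case: ifP; rewrite !inE eqxx ?orbT.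
have sto : forall c, c \in ws -> st c != ot c.
  by move=> c cin; rewrite /st /ot; case: ifP => _; rewrite ?ene // eq_sym ene.
have otS : forall c, c \in ws -> ot c \notin S.
  move=> c cin; apply/negP => /mapP [c' c'in h].
  have ecc : c = c' by apply: (ends_inj uf cin c'in (otin c)); rewrite h stin.
  by move: (sto c cin); rewrite h ecc eqxx.
have uS : uniq S by apply: uniq_sel => // c _; exact: stin.
have cF : #|[set z | f z]| = k.
  have -> : [set z | f z] = [set z | phi z \in S] by apply/setP => z; rewrite !inE ffunE.
  rewrite -(card_imset _ inj) -szws -(size_map st) -(card_uniqP uS).
  apply: eq_card => v; apply/imsetP/idP => [[z]|vS]; first by rewrite inE => ? ->.
  move/mapP: (vS) => [c cin hv]; have vin : v \in ends c by rewrite hv stin.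
  have [z hz] := inL c v cin vin.
  by exists z => //; rewrite inE -hz.
have phiL : forall z, exists2 c, c \in ws & phi z \in ends c.
  move=> z; have : phi z \in flatten (map (@ends V) ws) by rewrite (perm_mem hperm) map_f ?mem_enum.
  by case/flattenP => s' /mapP [c cin ->] hz; exists c.
have hla : last a p = phi y by exact: hl.
have fx : f x.
  rewrite ffunE; have [c cin hc] := phiL x.
  move: hc; rewrite /ends !inE => /orP[/eqP h1|/eqP h2].
  - case hi : (inxy (lst c)).
    + exfalso; move: hi; rewrite /inxy => /orP[/eqP h|/eqP h].
        by move: (ene c cin); rewrite h -h1 eqxx.
      by apply: (hxy c cin); rewrite -h1 h hla !eqxx.
    + by apply/mapP; exists c => //; rewrite /st hi.
  - apply/mapP; exists c => //; by rewrite /st /inxy -h2 eqxx.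
have fy : f y.
  rewrite ffunE; have [c cin hc] := phiL y.
  move: hc; rewrite /ends !inE => /orP[/eqP h1|/eqP h2].
  - case hi : (inxy (lst c)).
    + exfalso; move: hi; rewrite /inxy => /orP[/eqP h|/eqP h].
        by apply: (hxy c cin); rewrite -h1 h hla !eqxx orbT.
      by move: (ene c cin); rewrite h -h1 eqxx.
    + by apply/mapP; exists c => //; rewrite /st hi.
  - apply/mapP; exists c => //; by rewrite /st /inxy -h2 eqxx orbT.
have pk : pscore e phi f = k.
  apply/eqP; rewrite eqn_leq -{1}cF UB_leaves //=.
  apply: pscore_ge.
    apply: leq_trans (max_card (mem (powerset [set: V]))); rewrite card_powerset cardsT.
    apply: leq_trans (ltnW (ltn_expl _ (isT : 1 < 2))).
    apply: leq_trans (leq_card _ inj); by rewrite hX mul2n -addnn leq_addr.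
  move=> g hg.
  have gphi : forall z, g (phi z) = (phi z \in S) by move=> z; rewrite (eqP (forallP hg z)) ffunE.
  set CH := [set E : {set V} | [exists u, exists v, [&& e u v, E == [set u; v] & g u != g v]]].
  have hc : forall c, c \in ws -> exists2 F, F \in wedg c & F \in CH.
    move=> c cin; apply: change_on_path; first exact: (allP hall c cin).
    have [z1 h1] := inL c _ cin (stin c). have [z2 h2] := inL c _ cin (otin c).
    have g1 : g (st c) by rewrite h1 gphi -h1 map_f.
    have g2 : g (ot c) = false by rewrite h2 gphi -h2 (negbTE (otS c cin)).
    move: g1 g2; rewrite /st /ot -/(lst c); case: ifP => _ -> ->; by [].
  pose h c := if [pick F | (F \in wedg c) && (F \in CH)] is Some F then F else set0.
  have hh : forall c, c \in ws -> (h c \in wedg c) && (h c \in CH).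
    move=> c cin; rewrite /h; case: pickP => [F //|none].
    by have [F H1 H2] := hc c cin; move: (none F); rewrite H1 H2.
  have uh : uniq (map h ws).
    rewrite map_inj_in_uniq // => c c' cin c'in heq; apply/eqP/negPn/negP => nc.
    have := allP (allP hDJ c cin) c' c'in; rewrite /= (negbTE nc) /= => /hasP; apply.
    by exists (h c); [case/andP: (hh c cin) | rewrite heq; case/andP: (hh c' c'in)].
  rewrite /changes -/CH -szws -(size_map h) -(card_uniqP uh).
  apply: subset_leq_card; apply/subsetP => F /mapP [c cin ->]; by case/andP: (hh c cin).
have : f \in A_k e1 phi1 k by rewrite hA inE pk.
rewrite inE => /eqP pk1.
have := UB_cherry hT1 hch fx fy; by rewrite pk1 cF ltnn.
Qed.

End Main.


Theorem corollary5 (k : nat) (X V1 V2 : finType)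
  (e1 : rel V1) (phi1 : X -> V1) (e2 : rel V2) (phi2 : X -> V2)
  (x y : X) (p : seq V2) :
  1 <= k -> #|X| = 2 * k ->
  binary_phylo_tree e1 phi1 -> binary_phylo_tree e2 phi2 ->
  A_k e1 phi1 k = A_k e2 phi2 k ->
  cherry e1 phi1 x y ->
  (* P = phi2 x :: p is the x-y path in the second tree *)
  path e2 (phi2 x) p -> last (phi2 x) p = phi2 y -> uniq (phi2 x :: p) ->
  forall b w : V2, b \in p -> b != phi2 y -> e2 b w -> w \notin phi2 x :: p ->
  ~~ odd #|[set z : X | connect
       [rel u v | [&& e2 u v, u \notin phi2 x :: p & v \notin phi2 x :: p]]
       w (phi2 z)]|.
Proof.
move=> hk hX hT1 hT2 hA hch pp hl up b w bin bny ebw wnot.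
apply/negP => hodd.
exact: (main_contra hT2 pp hl up bin bny ebw wnot hX hT1 hA hch hodd).
Qed.
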